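(* Let $s,m$ be positive integers with $m$ odd, and let $n=sm$. Let $F\in\mathbb{F}_{2^s}[x]$ be a polynomial which, viewed as a function $\mathbb{F}_{2^n}\to\mathbb{F}_{2^n}$, is differentially $(1,4)$-uniform, i.e. $\delta_{F,1}=4$. Then for all $a,b\in\mathbb{F}_{2^s}$ with $a\neq 0$, the equation $F(x+a)+F(x)=b$ has no solution $x\in\mathbb{F}_{2^n}\setminus\mathbb{F}_{2^s}$.
   Context: For a function $F:\mathbb{F}_{p^n}\to\mathbb{F}_{p^n}$ and $c\in\mathbb{F}_{p^n}$, let ${}_c\Delta_F(a,b)=\#\{x\in\mathbb{F}_{p^n}: F(x+a)-cF(x)=b\}$, and the $c$-differential uniformity of $F$ is $\delta_{F,c}=\max\{{}_c\Delta_F(a,b): a,b\in\mathbb{F}_{p^n},\ a\neq 0 \text{ if } c=1\}$. $F$ is called differentially $(c,\delta)$-uniform if $\delta_{F,c}=\delta$. *)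

(* Defs.v *)
From HB Require Import structures.
From mathcomp Require Import all_boot all_order all_algebra all_field.
Set Implicit Arguments. Unset Strict Implicit. Unset Printing Implicit Defensive.
Import Order.TTheory GRing.Theory Num.Theory.
Local Open Scope ring_scope.

Definition cDelta (K : finFieldType) (F : K -> K) (c a b : K) : nat :=
  #|[set x : K | F (x + a) - c * F x == b]|.

Definition cdiff_unif (K : finFieldType) (F : K -> K) (c : K) : nat :=
  (\max_(ab : K * K | (c == 1%R) ==> (ab.1 != 0%R)) cDelta F c ab.1 ab.2)%N.

Definition in_subfield (K : finFieldType) (s : nat) (x : K) : bool :=
  x ^+ (2 ^ s) == x.

(* Main.v *)
Require Import Defs.
From HB Require Import structures.
From mathcomp Require Import all_boot all_order all_algebra all_field.
Import GRing.Theory.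
Local Open Scope ring_scope.
Set Implicit Arguments.

Section Helpers.
Variables (L : finFieldType) (s : nat).
Hypothesis ch2 : 2%N \in [pchar L].

Definition sig (y : L) := y ^+ (2 ^ s).

Lemma sigD y z : sig (y + z) = sig y + sig z.
Proof.
rewrite /sig; apply: exprDn_pchar.
by rewrite (eq_pnat _ (pcharf_eq ch2)) pnatX pnat_id.
Qed.

Lemma sig0 : sig 0 = 0.
Proof. by rewrite /sig expr0n expn_eq0. Qed.

Lemma sigN y : sig (- y) = - sig y.
Proof. by rewrite !oppr_pchar2. Qed.

Lemma sig_inj : injective sig.
Proof.
move=> y z e; apply/eqP; rewrite -subr_eq0.
have : sig (y - z) == 0 by rewrite sigD sigN e subrr.
by rewrite /sig expf_eq0 => /andP[].
Qed.

Lemma sig_mulrn c t : sig (c *+ t) = sig c *+ t.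
Proof. by elim: t => [|t IH]; rewrite ?sig0 // !mulrS sigD IH. Qed.

Lemma sig_horner (F : {poly L}) (hF : forall i : nat, in_subfield s F`_i) y :
  sig F.[y] = F.[sig y].
Proof.
rewrite !horner_coef (big_morph sig sigD sig0); apply: eq_bigr => i _.
by rewrite /sig exprMn (eqP (hF i)) exprAC.
Qed.

Lemma iter_sig_inj k : injective (iter k sig).
Proof. elim: k => [|k IH] y z //= /sig_inj; exact: IH. Qed.

Lemma iter_sig_add k y c : sig c = c -> iter k sig (y + c) = iter k sig y + c.
Proof. by move=> hc; elim: k => [|k IH] //=; rewrite IH sigD hc. Qed.

Variable m : nat.
Hypothesis hm : odd m.
Hypothesis hL : #|L| = (2 ^ (s * m))%N.

Lemma iter_sig_pow k y : iter k sig y = y ^+ (2 ^ (s * k)).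
Proof.
elim: k => [|k IH] /=; first by rewrite muln0 expr1.
by rewrite IH /sig -exprM -expnD mulnS addnC.
Qed.

Lemma iter_sig_m y : iter m sig y = y.
Proof. by rewrite iter_sig_pow -hL expf_card. Qed.

Lemma iter_sig_mk k y : iter (m * k) sig y = y.
Proof.
elim: k => [|k IH]; first by rewrite muln0.
by rewrite mulnS iterD IH iter_sig_m.
Qed.

Lemma odd_mulrn (c : L) : c *+ m = c.
Proof.
rewrite -(odd_double_half m) hm -muln2 mulnC mulrnDr mulrnA.
by rewrite (mulrn_pchar ch2) mul0rn addr0.
Qed.

Lemma lemA k y c : sig c = c -> iter k sig y = y + c -> c = 0.
Proof.
move=> hc hk.
have ht : forall t, iter (k * t) sig y = y + c *+ t.
  elim=> [|t IH]; first by rewrite muln0 mulr0n addr0.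
  rewrite mulnS iterD IH iter_sig_add; last by rewrite sig_mulrn hc.
  by rewrite hk mulrS addrA.
have := ht m; rewrite mulnC iter_sig_mk odd_mulrn.
by move=> /(congr1 (fun z => z - y)) /=; rewrite subrr addrAC subrr add0r => ->.
Qed.

Lemma lemB x : sig x != x -> iter 2 sig x != x.
Proof.
move=> hx; apply/negP => /eqP h2.
have ht : forall t, iter (2 * t) sig x = x.
  by elim=> [|t IH] //; rewrite mulnS iterD IH h2.
move: hx; rewrite -[X in _ != X](iter_sig_m x).
by rewrite -(odd_double_half m) hm -muln2 mulnC /= iterD ht eqxx.
Qed.

End Helpers.
Arguments sig {L} s y.

Theorem proposition2p1 (L : finFieldType) (s m : nat)
  (hs : (0 < s)%N) (hm0 : (0 < m)%N) (hm : odd m)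
  (hL : #|L| = (2 ^ (s * m))%N)
  (F : {poly L}) (hF : forall i : nat, in_subfield s F`_i)
  (hdu : cdiff_unif (fun x => F.[x]) 1 = 4%N) :
  forall a b : L, in_subfield s a -> in_subfield s b -> a != 0 ->
  forall x : L, ~~ in_subfield s x -> F.[x + a] + F.[x] != b.
Proof.
move=> a b ha hb a0 x hx; apply/negP => /eqP hsol.
have ch2 : 2%N \in [pchar L] by apply: (card_finPcharP hL).
have sa : sig s a = a by apply/eqP.
have sb : sig s b = b by apply/eqP.
pose S := [set y : L | F.[y + a] - 1 * F.[y] == b].
have inS : forall y, (y \in S) = (F.[y + a] + F.[y] == b).
  by move=> y; rewrite inE mul1r (GRing.subr_pchar2 ch2).
have Ssig : forall y, y \in S -> sig s y \in S.
  move=> y; rewrite !inS => /eqP h; apply/eqP.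
  by rewrite -sa -(@sigD L s ch2) -!(sig_horner s ch2 _ hF) -(@sigD L s ch2) h sb.
have Sa : forall y, y \in S -> y + a \in S.
  move=> y; rewrite !inS => /eqP h; apply/eqP.
  by rewrite -addrA (addrr_pchar2 ch2) addr0 addrC.
pose f (p : 'I_3 * bool) := iter p.1 (sig s) x + (if p.2 then a else 0).
have fS : forall p, f p \in S.
  case=> [i e]; rewrite /f /=.
  have : iter i (sig s) x \in S.
    elim: (nat_of_ord i) => [|k IH] /=; last exact: Ssig.
    by rewrite inS hsol.
  by case: e => /= h; rewrite ?addr0 //; apply: Sa.
have finj : injective f.
  have sE : forall e : bool, sig s (if e then a else 0) = (if e then a else 0).
    by case; [exact: sa | exact: sig0 L s].
  move=> [i e] [j e']; rewrite /f /=.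
  wlog hij : i j e e' / (i <= j)%N.
    move=> H h; case: (leqP i j) => [le|/ltnW le]; first exact: H.
    by apply/esym; apply: H.
  move=> h.
  have hk3 : ((j - i)%N < 3)%N by apply: leq_ltn_trans (leq_subr _ _) (ltn_ord j).
  have fin : (j - i)%N = 0%N -> e = e' -> (i, e) = (j, e').
    move=> k0 ->; congr (_, _); apply/val_inj/eqP.
    by rewrite eqn_leq hij -subn_eq0 k0.
  rewrite -(subnKC hij) iterD -!(@iter_sig_add L s ch2) // in h.
  move/(@iter_sig_inj L s ch2): h => h; rewrite (@iter_sig_add L s ch2) ?sE // in h; move: h.
  move: hk3 fin; case: (j - i)%N => [|k] hk3 fin h.
    apply: fin => //; move/addrI: h.
    by case: e; case: e' => // /eqP; rewrite ?(eq_sym 0) (negbTE a0).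
  have hxa : iter k.+1 (sig s) x = x + a -> False.
    by move=> hh; move/eqP: a0; apply; apply: (lemA s ch2 m hm hL) hh.
  have hxx : iter k.+1 (sig s) x = x -> False.
    move: hk3 => {hxa h fin}; case: k => [|[|k]] // _ hh.
      by move: hx => /negP; apply; apply/eqP; exact: hh.
    by move: (lemB s m hm hL x hx); rewrite hh eqxx.
  clear fin; case: e e' h => [] [] /= h.
  - by exfalso; apply: hxx; apply/esym; exact: (addIr _ h).
  - by exfalso; apply: hxa; rewrite addr0 in h; rewrite h.
  - exfalso; apply: hxa.
    by rewrite addr0 in h; rewrite [in RHS]h -addrA (addrr_pchar2 ch2) addr0.
  - by exfalso; apply: hxx; rewrite !addr0 in h; apply/esym.
have : (#|[set f p | p in [set: 'I_3 * bool]]| <= #|S|)%N.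
  by apply: subset_leq_card; apply/subsetP => y /imsetP[p _ ->]; exact: fS.
rewrite card_imset // cardsT card_prod card_ord card_bool /=.
have : (#|S| <= 4)%N.
  rewrite -hdu /cdiff_unif.
  by apply: (@leq_bigmax_cond _ _ (fun ab : L * L => cDelta (fun x => F.[x]) 1 ab.1 ab.2) (a, b)) => /=; rewrite eqxx.
by move=> h1 h2; have := leq_trans h2 h1.
Qed.
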